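(* The set $\mathcal W$ of $n\times n$ matrices is closed under matrix multiplication: if $P,Q\in\mathcal W$ then $PQ\in\mathcal W$.
   Context: Let $\mathcal N=\{1,\ldots,n\}$. A matrix is stochastic if it is entrywise nonnegative with row sums $1$. For stochastic $P$ and $\mathcal A\subseteq\mathcal N$, $F_P(\mathcal A)=\{j:\ p_{ij}>0\text{ for some } i\in\mathcal A\}$. $\mathcal W$ is the set of stochastic $n\times n$ matrices $P$ such that for any disjoint nonempty $\mathcal A,\tilde{\mathcal A}\subseteq\mathcal N$, either $F_P(\mathcal A)\cap F_P(\tilde{\mathcal A})\neq\emptyset$, or $F_P(\mathcal A)\cap F_P(\tilde{\mathcal A})=\emptyset$ and $|F_P(\mathcal A)\cup F_P(\tilde{\mathcal A})|\ge|\mathcal A\cup\tilde{\mathcal A}|$. *)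

(* Defs.v *)
(* Matrices with entries in an arbitrary real (ordered) field R;
   the paper's real matrices are the instance R = reals. *)
From HB Require Import structures.
From mathcomp Require Import all_boot all_order all_algebra.
Set Implicit Arguments. Unset Strict Implicit. Unset Printing Implicit Defensive.
Import Order.TTheory GRing.Theory Num.Theory.
Local Open Scope ring_scope.

Definition stochastic (R : realFieldType) (n : nat) (P : 'M[R]_n) : Prop :=
  (forall i j, 0 <= P i j) /\ (forall i, \sum_(j < n) P i j = 1).

Definition F_P (R : realFieldType) (n : nat) (P : 'M[R]_n) (A : {set 'I_n})
  : {set 'I_n} := [set j | [exists i in A, 0 < P i j]].

Definition in_W (R : realFieldType) (n : nat) (P : 'M[R]_n) : Prop :=
  stochastic P /\
  forall A A' : {set 'I_n},
    A != set0 -> A' != set0 -> [disjoint A & A'] ->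
    (F_P P A :&: F_P P A' != set0) \/
    (F_P P A :&: F_P P A' = set0 /\
     (#|A :|: A'| <= #|F_P P A :|: F_P P A'|)%N).

(* Main.v *)
Require Import Defs.
From HB Require Import structures.
From mathcomp Require Import all_boot all_order all_algebra.
Import Order.TTheory GRing.Theory Num.Theory.
Local Open Scope ring_scope.

Section Aux.
Context {R : realFieldType} {n : nat}.

Lemma stoch_mul (P Q : 'M[R]_n) : stochastic P -> stochastic Q -> stochastic (P *m Q).
Proof.
move=> [P0 P1] [Q0 Q1]; split.
  move=> i j; rewrite mxE; apply: sumr_ge0 => k _; exact: mulr_ge0.
move=> i; under eq_bigr => j _ do rewrite mxE.
rewrite exchange_big /= -(P1 i); apply: eq_bigr => k _.
by rewrite -mulr_sumr Q1 mulr1.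
Qed.

Lemma F_nonempty (P : 'M[R]_n) (A : {set 'I_n}) :
  stochastic P -> A != set0 -> F_P P A != set0.
Proof.
move=> [P0 P1] /set0Pn [i iA]; apply/set0Pn.
have : [exists j, 0 < P i j].
  apply: contraT => /existsPn H.
  have : \sum_(j < n) P i j = 0.
    apply: big1 => j _; apply/eqP; rewrite eq_le P0 andbT.
    by move: (H j); rewrite -leNgt.
  by rewrite P1 => /eqP; rewrite oner_eq0.
move=> /existsP [j Hj]; exists j; rewrite inE; apply/existsP; exists i; by rewrite iA.
Qed.

Lemma F_sub (P : 'M[R]_n) (A B : {set 'I_n}) : A \subset B -> F_P P A \subset F_P P B.
Proof.
move=> /subsetP AB; apply/subsetP => j; rewrite !inE => /existsP [i /andP [iA H]].
apply/existsP; exists i; by rewrite AB.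
Qed.

Lemma F_mul (P Q : 'M[R]_n) (A : {set 'I_n}) : stochastic P -> stochastic Q ->
  F_P (P *m Q) A = F_P Q (F_P P A).
Proof.
move=> [P0 _] [Q0 _]; apply/setP => j; rewrite !inE.
apply/existsP/existsP.
  move=> [i /andP [iA]]; rewrite mxE => Hs.
  have : [exists k, 0 < P i k * Q k j].
    apply: contraT => /existsPn H.
    suff : \sum_(k < n) P i k * Q k j <= 0 by rewrite leNgt Hs.
    apply: sumr_le0 => k _; by move: (H k); rewrite -leNgt.
  move=> /existsP [k Hk]; exists k; rewrite inE; apply/andP; split.
    apply/existsP; exists i; rewrite iA /= lt_def P0 andbT.
    by apply/eqP => E; move: Hk; rewrite E mul0r ltxx.
  rewrite lt_def Q0 andbT.
  by apply/eqP => E; move: Hk; rewrite E mulr0 ltxx.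
move=> [k /andP []]; rewrite inE => /existsP [i /andP [iA Pik]] Qkj.
exists i; rewrite iA /= mxE (bigD1 k) //=.
apply: ltr_wpDr; first by apply: sumr_ge0 => l _; exact: mulr_ge0.
exact: mulr_gt0.
Qed.

End Aux.
Arguments F_nonempty {R n P A}.
Arguments F_sub {R n} P {A B}.

Theorem mainTheorem7 (R : realFieldType) (n : nat) (P Q : 'M[R]_n) :
  in_W P -> in_W Q -> in_W (P *m Q).
Proof.
move=> [sP WP] [sQ WQ]; split; first exact: stoch_mul.
move=> A A' A0 A'0 dA.
rewrite !F_mul //.
have [E|NE] := eqVneq (F_P Q (F_P P A) :&: F_P Q (F_P P A')) set0; last by left.
right; split => //.
have B0 := F_nonempty sP A0; have B'0 := F_nonempty sP A'0.
case: (WP A A' A0 A'0 dA) => [Hn|[EB cB]].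
  exfalso; move: E; apply/eqP.
  have /set0Pn [j Hj] := F_nonempty sQ Hn; apply/set0Pn; exists j.
  by rewrite inE (subsetP (F_sub Q (subsetIl _ _)) _ Hj)
             (subsetP (F_sub Q (subsetIr _ _)) _ Hj).
have dB : [disjoint F_P P A & F_P P A'] by rewrite -setI_eq0 EB.
case: (WQ _ _ B0 B'0 dB) => [Hn|[_ cC]]; first by rewrite E eqxx in Hn.
exact: leq_trans cB cC.
Qed.
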